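(* For every integer $n\geq 3$ there exists a strongly $2$-connected $(n-1)$-regular digraph on $2n$ vertices with no Hamilton cycle. For every integer $n\geq 3$ there exists a strongly $2$-connected $(n-1)$-regular oriented graph on $4n+2$ vertices with no Hamilton cycle.
   Context: A digraph has no loops and at most one edge in each direction between two vertices; an oriented graph has at most one edge between any two vertices. A digraph is $d$-regular if every vertex has in- and outdegree exactly $d$. Strongly 2-connected means the digraph has at least three vertices and remains strongly connected after deleting any single vertex. A Hamilton cycle is a directed cycle through all vertices. *)

(* Defs.v *)
From mathcomp Require Import all_boot.
Set Implicit Arguments. Unset Strict Implicit. Unset Printing Implicit Defensive.

(* A digraph on the finite vertex type T is an irreflexive relation e : rel T
   (e x y means there is an edge x -> y). Being a relation, it has at most one
   edge in each direction between two vertices. *)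
Definition loopless (T : finType) (e : rel T) : Prop := forall x, ~~ e x x.

Definition oriented (T : finType) (e : rel T) : Prop :=
  loopless e /\ forall x y, e x y -> ~~ e y x.

Definition regular (T : finType) (e : rel T) (d : nat) : Prop :=
  forall x, #|[set y | e x y]| = d /\ #|[set y | e y x]| = d.

Definition strongly_2_connected (T : finType) (e : rel T) : Prop :=
  2 < #|T| /\
  forall v x y, x != v -> y != v ->
    connect [rel a b | [&& e a b, a != v & b != v]] x y.

Definition hamiltonian (T : finType) (e : rel T) : Prop :=
  exists s : seq T, [/\ uniq s, size s = #|T| & cycle e s].

(* Main.v *)
Require Import Defs.
From mathcomp Require Import all_boot.
From mathcomp Require Import zify.
Set Implicit Arguments. Unset Strict Implicit. Unset Printing Implicit Defensive.

Section Transfer.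
Variables (T : finType) (N : nat) (HN : #|T| = N).
Definition tof (i : 'I_N) : T := enum_val (cast_ord (esym HN) i).
Definition fromt (t : T) : 'I_N := cast_ord HN (enum_rank t).
Lemma tofK : cancel tof fromt.
Proof. by move=> i; rewrite /tof /fromt enum_valK cast_ordKV. Qed.
Lemma fromtK : cancel fromt tof.
Proof. by move=> t; rewrite /tof /fromt cast_ordK enum_rankK. Qed.

Variable E : rel T.
Definition eI : rel 'I_N := fun a b => E (tof a) (tof b).

Lemma tr_loopless : loopless E -> loopless eI.
Proof. by move=> H x; apply: H. Qed.

Lemma tr_oriented : oriented E -> oriented eI.
Proof. by case=> H1 H2; split=> [x|x y]; [apply: H1 | apply: H2]. Qed.

Lemma card_pre (P : pred T) : #|[set b : 'I_N | P (tof b)]| = #|[set t | P t]|.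
Proof.
have -> : [set b : 'I_N | P (tof b)] = fromt @: [set t | P t].
  apply/setP=> b; rewrite inE; apply/idP/imsetP.
    by move=> Pb; exists (tof b); rewrite ?inE ?tofK.
  by case=> t; rewrite inE => Pt ->; rewrite fromtK.
by rewrite card_imset //; apply: can_inj fromtK.
Qed.

Lemma tr_regular d : regular E d -> regular eI d.
Proof.
move=> H x; case: (H (tof x)) => H1 H2; split.
  by rewrite /eI (card_pre (fun t => E (tof x) t)).
by rewrite /eI (card_pre (fun t => E t (tof x))).
Qed.

Lemma connect_map (T1 T2 : finType) (f : T1 -> T2) (e1 : rel T1) (e2 : rel T2) :
  (forall a b, e1 a b -> e2 (f a) (f b)) ->
  forall a b, connect e1 a b -> connect e2 (f a) (f b).
Proof.
move=> He a b /connectP [s Hs ->]; elim: s a Hs => [|c s IH] a /=; first by rewrite connect0.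
case/andP=> Hac Hp; apply: connect_trans (connect1 (He _ _ Hac)) (IH _ Hp).
Qed.

Lemma tr_s2c : strongly_2_connected E -> strongly_2_connected eI.
Proof.
case=> Hc H; split; first by rewrite card_ord -HN.
move=> v x y xv yv.
have := H (tof v) (tof x) (tof y).
rewrite !(inj_eq (can_inj tofK)) => /(_ xv yv) Hcon.
rewrite -(tofK x) -(tofK y).
apply: connect_map Hcon => a b /and3P [Hab av bv].
apply/and3P; split; first by rewrite /eI !fromtK.
  by apply: contra av => /eqP <-; rewrite fromtK.
by apply: contra bv => /eqP <-; rewrite fromtK.
Qed.

Lemma tr_ham : ~ hamiltonian E -> ~ hamiltonian eI.
Proof.
move=> H [s [Us Ss Cs]]; apply: H; exists (map tof s); split.
- by rewrite map_inj_uniq //; apply: can_inj tofK.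
- by rewrite size_map Ss card_ord HN.
- by rewrite cycle_map.
Qed.
End Transfer.

Lemma path_closed (T : eqType) (f : T -> T) (X : pred T) x s :
  path (frel f) x s -> x \in X -> (forall t, t \in X -> f t \in X) ->
  forall t, t \in x :: s -> t \in X.
Proof.
elim: s x => [|y s IH] x /=; first by move=> _ Hx _ t; rewrite inE => /eqP ->.
case/andP=> /eqP Hxy Hp Hx Hcl t; rewrite inE => /orP [/eqP -> //|].
by apply: IH => //; rewrite -Hxy Hcl.
Qed.

Lemma ham_all (T : finType) (s : seq T) :
  uniq s -> size s = #|T| -> forall t, t \in s.
Proof.
move=> Us Ss.
have /subset_cardP : #|s| = #|T| by rewrite (card_uniqP Us).
by move=> /(_ (subset_predT _)) H t; rewrite H.
Qed.

Lemma ham_closed (T : finType) (s : seq T) :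
  uniq s -> size s = #|T| ->
  forall X : {set T}, forall t0, t0 \in X -> (forall t, t \in X -> next s t \in X) ->
  forall t, t \in X.
Proof.
move=> Us Ss.
have alls := ham_all Us Ss.
move=> X t0 Ht0 Hcl t.
have Cn := cycle_next Us.
have := Cn; rewrite -(rot_cycle (index t0 s)) rot_index ?alls //.
rewrite /= => Hp.
have Hcl' : forall u, u \in X -> next s u \in X by [].
have := path_closed Hp Ht0 Hcl' (t := t).
apply.
have : t \in rot (index t0 s) s by rewrite mem_rot alls.
rewrite rot_index ?alls // !inE mem_rcons inE.
by case/orP=> ->; rewrite ?orbT.
Qed.


Section NoHam.
Variables (T : finType) (sig : T -> T) (A : {set T}).
Hypothesis clos : forall X : {set T}, forall t0, t0 \in X ->
  (forall t, t \in X -> sig t \in X) -> forall t, t \in X.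

Section Half.
Variables (x' y' a1' a2' : T).
Hypotheses (a1A' : a1' \in A) (a2A' : a2' \in A) (xA' : x' \notin A) (yA' : y' \notin A).
Hypotheses (a12' : a1' != a2') (xy' : x' != y').
Hypothesis F1 : forall a, a \in A -> sig a \notin A ->
   (a == a1') && (sig a == y') || (a == a2') && (sig a == x').
Hypothesis F2 : forall v, v \notin A -> sig v \in A ->
   (v == x') && (sig v == a1') || (v == y') && (sig v == a2').

Lemma half1 : sig x' = a1' -> sig a1' != y' -> False.
Proof.
move=> sx sa1.
suff: y' \in x' |: A by rewrite !inE (negbTE yA') orbF eq_sym (negbTE xy').
apply: (clos (t0 := x')); first by rewrite !inE eqxx.
move=> t; rewrite !inE => /orP [/eqP ->|tA]; first by rewrite sx a1A' orbT.
case sA: (sig t \in A); first by rewrite orbT.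
have := F1 tA; rewrite sA => /(_ isT) /orP [/andP [/eqP ta /eqP st]|/andP [_ /eqP ->]].
  by move: sa1; rewrite -ta st eqxx.
by rewrite eqxx.
Qed.

Lemma half2 : sig x' = a1' -> sig y' != a2' -> sig a1' = y' -> False.
Proof.
move=> sx sy sa1.
suff: a2' \in ~: (A :\ a1') by rewrite !inE eq_sym (negbTE a12') a2A'.
apply: (clos (t0 := x')); first by rewrite !inE (negbTE xA') andbF.
move=> t; rewrite !inE negb_and negbK => /orP [/eqP ->|tA].
  by rewrite sa1 (negbTE yA') andbF.
case sA: (sig t \in A); last by rewrite andbF.
have := F2 tA; rewrite sA => /(_ isT) /orP [/andP [_ /eqP ->]|/andP [/eqP ty /eqP st]].
  by rewrite eqxx.
by move: sy; rewrite -ty st eqxx.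
Qed.
End Half.

Variables (x y a1 a2 a3 : T).
Hypotheses (a1A : a1 \in A) (a2A : a2 \in A) (a3A : a3 \in A) (xA : x \notin A) (yA : y \notin A).
Hypotheses (a31 : a3 != a1) (a32 : a3 != a2) (a12 : a1 != a2) (xy : x != y).
Hypothesis F1 : forall a, a \in A -> sig a \notin A ->
   (a == a1) && (sig a == y) || (a == a2) && (sig a == x).
Hypothesis F2 : forall v, v \notin A -> sig v \in A ->
   (v == x) && (sig v == a1) || (v == y) && (sig v == a2).

Lemma no_ham_core : False.
Proof.
have F1' : forall a, a \in A -> sig a \notin A ->
   (a == a2) && (sig a == x) || (a == a1) && (sig a == y).
  by move=> a aA sA; rewrite orbC; apply: F1.
have F2' : forall v, v \notin A -> sig v \in A ->
   (v == y) && (sig v == a2) || (v == x) && (sig v == a1).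
  by move=> v vA sA; rewrite orbC; apply: F2.
have a21 : a2 != a1 by rewrite eq_sym.
have yx : y != x by rewrite eq_sym.
case: (eqVneq (sig x) a1) => sx; case: (eqVneq (sig y) a2) => sy.
- case: (eqVneq (sig a1) y) => sa1; last exact: (half1 (x' := x) (y' := y) (a1' := a1) (a2' := a2)).
  case: (eqVneq (sig a2) x) => sa2; last exact: (half1 (x' := y) (y' := x) (a1' := a2) (a2' := a1)).
  suff: a3 \in [set x; a1; y; a2].
    rewrite !inE (negbTE a31) (negbTE a32) /=.
    have -> : (a3 == x) = false by apply/negbTE; apply: contraNneq xA => <-.
    by have -> : (a3 == y) = false by apply/negbTE; apply: contraNneq yA => <-.
  apply: (clos (t0 := x)); first by rewrite !inE eqxx.
  move=> t; rewrite !inE -!orbA => /or4P [] /eqP ->;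
    by rewrite ?sx ?sa1 ?sy ?sa2 eqxx ?orbT.
- case: (eqVneq (sig a1) y) => sa1; last exact: (half1 (x' := x) (y' := y) (a1' := a1) (a2' := a2)).
  exact: (half2 (x' := x) (y' := y) (a1' := a1) (a2' := a2)).
- case: (eqVneq (sig a2) x) => sa2; last exact: (half1 (x' := y) (y' := x) (a1' := a2) (a2' := a1)).
  exact: (half2 (x' := y) (y' := x) (a1' := a2) (a2' := a1)).
- suff: a1 \in ~: A by rewrite inE a1A.
  apply: (clos (t0 := x)); first by rewrite inE.
  move=> t; rewrite inE => tA; rewrite inE; apply/negP => sA.
  have := F2 tA sA; case/orP => /andP [/eqP -> /eqP s].
    by move: sx; rewrite s eqxx.
  by move: sy; rewrite s eqxx.
Qed.
End NoHam.


Section Glue.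
Variables (V : finType) (h : rel V) (p q : V) (k : nat).
Hypotheses (pq : p != q).

Definition cross (s t : bool * V) : bool :=
  [|| (s == (false,p)) && (t == (true,p)), (s == (true,p)) && (t == (false,q)),
      (s == (false,q)) && (t == (true,q)) | (s == (true,q)) && (t == (false,p))].
Definition G : rel (bool * V) := fun s t => (s.1 == t.1) && h s.2 t.2 || cross s t.
Definition outp (s : bool * V) : bool * V :=
  (~~ s.1, if s.1 then (if s.2 == p then q else p) else s.2).
Definition inp (s : bool * V) : bool * V :=
  (~~ s.1, if s.1 then s.2 else (if s.2 == p then q else p)).

Lemma cross_out b u c w :
  cross (b,u) (c,w) = ((u == p) || (u == q)) && ((c,w) == outp (b,u)).
Proof.
have qp : q != p by rewrite eq_sym.
rewrite /cross /outp !xpair_eqE /=.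
case: b; case: c; case: (eqVneq u p) => [E1|up]; case: (eqVneq u q) => [E2|uq];
case: (eqVneq w p) => [E3|wp]; case: (eqVneq w q) => [E4|wq]; subst => //=;
rewrite ?eqxx ?(negbTE pq) ?(negbTE qp) ?(negbTE up) ?(negbTE uq) ?(negbTE wp) ?(negbTE wq)
  ?andbF ?andbT ?orbF ?orbT //;
try (by move: pq; rewrite eqxx).
Qed.

Lemma cross_in b u c w :
  cross (c,w) (b,u) = ((u == p) || (u == q)) && ((c,w) == inp (b,u)).
Proof.
have qp : q != p by rewrite eq_sym.
rewrite /cross /inp !xpair_eqE /=.
case: b; case: c; case: (eqVneq u p) => [E1|up]; case: (eqVneq u q) => [E2|uq];
case: (eqVneq w p) => [E3|wp]; case: (eqVneq w q) => [E4|wq]; subst => //=;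
rewrite ?eqxx ?(negbTE pq) ?(negbTE qp) ?(negbTE up) ?(negbTE uq) ?(negbTE wp) ?(negbTE wq)
  ?andbF ?andbT ?orbF ?orbT //;
try (by move: pq; rewrite eqxx).
Qed.

Hypothesis hloop : forall u, ~~ h u u.

Lemma cross_diff s t : cross s t -> s.1 != t.1.
Proof. by case: s t => b u [c w]; rewrite cross_out => /andP [_ /eqP [-> _]]; case: b. Qed.

Lemma G_loopless : loopless G.
Proof.
case=> b u; rewrite /G eqxx /= (negbTE (hloop u)) /=.
by apply/negP => /cross_diff; rewrite eqxx.
Qed.

Lemma G_oriented : (forall u v, h u v -> ~~ h v u) -> oriented G.
Proof.
move=> hor; split; first exact: G_loopless.
case=> b u [c w]; rewrite /G /= => /orP [/andP [/eqP bc huw]|cr].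
  rewrite bc eqxx (negbTE (hor _ _ huw)) /=.
  by apply/negP => /cross_diff /=; rewrite eqxx.
move: (cross_diff cr) => /= bc; rewrite eq_sym (negbTE bc) /=.
move: cr; rewrite !cross_out => /andP [uP /eqP [Ec Ew]] /=.
apply/negP => /andP [wP /eqP [Eb Eu]].
subst c; case: b Ew Eu {bc Eb} => /= -> Eu; move: Eu;
  rewrite ?eqxx /=; case: (eqVneq u p) => [->|up] E.
- by move: pq; rewrite -E eqxx.
- by move: up; rewrite -E eqxx.
- by move: pq; rewrite -E eqxx.
- by move: up; rewrite -E eqxx.
Qed.

Lemma card_cross_out b u : #|[set t | cross (b,u) t]| = (u == p) + (u == q).
Proof.
case: (boolP ((u == p) || (u == q))) => uP.
  have -> : [set t | cross (b,u) t] = [set outp (b,u)].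
    by apply/setP => -[c w]; rewrite !inE cross_out uP.
  rewrite cards1; case/orP: uP => /eqP ->; rewrite eqxx ?(negbTE pq) //.
  by rewrite eq_sym (negbTE pq).
have -> : [set t | cross (b,u) t] = set0.
  by apply/setP => -[c w]; rewrite !inE cross_out (negbTE uP).
by rewrite cards0; move: uP; case: (u == p); case: (u == q).
Qed.

Lemma card_cross_in b u : #|[set t | cross t (b,u)]| = (u == p) + (u == q).
Proof.
case: (boolP ((u == p) || (u == q))) => uP.
  have -> : [set t | cross t (b,u)] = [set inp (b,u)].
    by apply/setP => -[c w]; rewrite !inE cross_in uP.
  rewrite cards1; case/orP: uP => /eqP ->; rewrite eqxx ?(negbTE pq) //.
  by rewrite eq_sym (negbTE pq).
have -> : [set t | cross t (b,u)] = set0.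
  by apply/setP => -[c w]; rewrite !inE cross_in (negbTE uP).
by rewrite cards0; move: uP; case: (u == p); case: (u == q).
Qed.

Lemma card_copy (b : bool) (P : pred V) :
  #|[set t : bool * V | (t.1 == b) && P t.2]| = #|[set w | P w]|.
Proof.
have -> : [set t : bool * V | (t.1 == b) && P t.2] = (pair b) @: [set w | P w].
  apply/setP => -[c w]; rewrite !inE /=; apply/andP/imsetP.
    by case=> /eqP -> Pw; exists w; rewrite ?inE.
  by case=> w'; rewrite inE => Pw [-> ->].
by rewrite card_imset //; move=> x y [].
Qed.

Hypothesis dout : forall u, #|[set w | h u w]| + (u == p) + (u == q) = k.
Hypothesis din : forall u, #|[set w | h w u]| + (u == p) + (u == q) = k.

Lemma G_regular : regular G k.
Proof.
case=> b u; split.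
- have -> : [set t | G (b,u) t] =
     [set t : bool * V | (t.1 == b) && h u t.2] :|: [set t | cross (b,u) t].
    by apply/setP => -[c w]; rewrite !inE /G /= eq_sym.
  rewrite cardsU.
  have -> : [set t : bool * V | (t.1 == b) && h u t.2] :&: [set t | cross (b,u) t] = set0.
    apply/setP => -[c w]; rewrite !inE /=; apply/negP => /andP [/andP [/eqP cb _] /cross_diff].
    by rewrite cb eqxx.
  by rewrite cards0 subn0 (card_copy b (h u)) card_cross_out addnA dout.
- have -> : [set t | G t (b,u)] =
     [set t : bool * V | (t.1 == b) && h t.2 u] :|: [set t | cross t (b,u)].
    by apply/setP => -[c w]; rewrite !inE /G /=.
  rewrite cardsU.
  have -> : [set t : bool * V | (t.1 == b) && h t.2 u] :&: [set t | cross t (b,u)] = set0.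
    apply/setP => -[c w]; rewrite !inE /=; apply/negP => /andP [/andP [/eqP cb _] /cross_diff].
    by rewrite cb eqxx.
  by rewrite cards0 subn0 (card_copy b (fun w => h w u)) card_cross_in addnA din.
Qed.

Hypothesis V3 : 2 < #|V|.
Hypothesis K1 : forall u v, connect h u v.
Definition hw (w : V) : rel V := [rel a b | [&& h a b, a != w & b != w]].
Hypothesis K2 : forall w u, u != w ->
  (exists z, [/\ (z == p) || (z == q), z != w & connect (hw w) u z]) /\
  (exists z, [/\ (z == p) || (z == q), z != w & connect (hw w) z u]).

Lemma G_s2c : strongly_2_connected G.
Proof.
split; first by rewrite card_prod card_bool; lia.
case=> bv w s t sv tv.
set R := [rel a b | [&& G a b, a != (bv,w) & b != (bv,w)]].
set o := ~~ bv.
have ob : (o == bv) = false by rewrite /o; case: (bv).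
have lift_o : forall u u', connect h u u' -> connect R (o,u) (o,u').
  apply: (connect_map (f := pair o)) => a c hac.
  by rewrite /= /G /= eqxx hac /= !xpair_eqE ob.
have lift_w : forall u u', connect (hw w) u u' -> connect R (bv,u) (bv,u').
  apply: (connect_map (f := pair bv)) => a c /and3P [hac aw cw].
  by rewrite /= /G /= eqxx hac /= !xpair_eqE eqxx aw cw.
have hub : forall s, s != (bv,w) -> connect R s (o,p) /\ connect R (o,p) s.
  case=> b u suv; case: (eqVneq b o) => [->|bo].
    by split; apply: lift_o; apply: K1.
  have bbv : b = bv by move: bo; rewrite /o; case: (b); case: (bv).
  subst b.
  have uw : u != w by move: suv; rewrite xpair_eqE eqxx.
  case: (K2 uw) => [[z [zP zw cz]] [z' [zP' zw' cz']]].
  split.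
  - apply: connect_trans (lift_w _ _ cz) _.
    have E : R (bv,z) (outp (bv,z)).
      rewrite /= /G /outp /= cross_out zP eqxx orbT /= !xpair_eqE eqxx zw /=.
      by rewrite -/o ob.
    apply: (@connect_trans _ _ (outp (bv,z))); first (apply: connect1; exact: E).
    by rewrite /outp /=; apply: lift_o; apply: K1.
  - apply: connect_trans _ (lift_w _ _ cz').
    have E : R (inp (bv,z')) (bv,z').
      rewrite /= /G /inp /= cross_in zP' eqxx orbT /= !xpair_eqE eqxx zw' /=.
      by rewrite -/o ob.
    apply: (@connect_trans _ _ (inp (bv,z'))); last (apply: connect1; exact: E).
    by rewrite /inp /=; apply: lift_o; apply: K1.
by case: (hub s sv) (hub t tv) => [H1 _] [_ H2]; apply: connect_trans H1 H2.
Qed.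

Lemma G_noham : ~ hamiltonian G.
Proof.
case=> s [Us Ss Cs].
have alls := ham_all Us Ss.
pose sig := next s.
have Esig : forall t, G t (sig t) by move=> t; apply: next_cycle Cs (alls t).
have sinj : injective sig by apply: can_inj (prev_next Us).
have [c cP] : exists c, c \in ~: [set p; q].
  apply/set0Pn; rewrite -card_gt0 cardsCs setCK cards2 pq; lia.
move: cP; rewrite !inE negb_or => /andP [cp cq].
apply: (@no_ham_core _ sig [set t | t.1] (ham_closed Us Ss) (false,p) (false,q)
    (true,p) (true,q) (true,c)).
- by rewrite inE.
- by rewrite inE.
- by rewrite inE.
- by rewrite inE.
- by rewrite inE.
- by rewrite xpair_eqE eqxx.
- by rewrite xpair_eqE eqxx.
- by rewrite xpair_eqE eqxx.
- by rewrite xpair_eqE eqxx.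
- move=> [b u]; rewrite !inE /= => -> {b}.
  have HG := Esig (true,u); case E: (sig (true,u)) => [c' w']; rewrite E in HG *.
  rewrite /= => /negbTE c'F; move: HG; rewrite c'F /G /= cross_out !xpair_eqE /=.
  case/andP=> uP /eqP ->.
  case: (eqVneq u p) => [->|up]; first by rewrite !eqxx.
  by move: uP; rewrite (negbTE up) /= => ->; rewrite eqxx.
- move=> [b u]; rewrite !inE /= => /negbTE -> {b}.
  have HG := Esig (false,u); case E: (sig (false,u)) => [c' w']; rewrite E in HG *.
  rewrite /= => c'T; move: HG; rewrite c'T /G /= cross_out !xpair_eqE /=.
  case/andP=> uP /eqP ->.
  by case/orP: uP => /eqP ->; rewrite !eqxx ?orbT.
Qed.
End Glue.

Lemma card_ordP m (P : pred nat) : #|[set w : 'I_m | P w]| = count P (iota 0 m).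
Proof. by rewrite cardsE cardE size_filter -val_enum_ord count_map enumT. Qed.

Lemma count_int a b m : count (fun j => (a <= j) && (j < b)) (iota 0 m) = minn b m - a.
Proof.
have: forall s, count (fun j => (a <= j) && (j < b)) (iota s m) = minn b (s+m) - maxn a s.
  elim: m => [|m IH] s /=; first lia.
  rewrite IH; lia.
by move=> /(_ 0); rewrite add0n maxn0.
Qed.

Lemma count2 a b c d m : b <= c ->
  count (fun j => ((a <= j) && (j < b)) || ((c <= j) && (j < d))) (iota 0 m) =
  (minn b m - a) + (minn d m - c).
Proof.
move=> bc.
have H := count_predUI (fun j => (a <= j) && (j < b)) (fun j => (c <= j) && (j < d)) (iota 0 m).
rewrite (eq_count (a1 := predI _ _) (a2 := pred0)) ?count_pred0 in H; last by move=> j /=; lia.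
by rewrite addn0 !count_int in H; rewrite -H.
Qed.

Lemma count_by m (P : pred nat) a b c d : b <= c ->
  (forall j, j < m -> P j = ((a <= j) && (j < b)) || ((c <= j) && (j < d))) ->
  count P (iota 0 m) = (minn b m - a) + (minn d m - c).
Proof.
move=> bc H; rewrite -count2 //; apply: eq_in_count => j; rewrite mem_iota add0n => /andP [_ /H].
by [].
Qed.

Definition hDn (i j : nat) : bool := (i != j) && ~~ ((i == 0) && (j == 1) || (i == 1) && (j == 0)).
Definition hD (n : nat) : rel 'I_n := fun a b => hDn a b.

Section DiInst.
Variable n : nat.
Hypothesis n3 : 2 < n.
Lemma n0D : 0 < n. Proof. lia. Qed.
Lemma n1D : 1 < n. Proof. lia. Qed.
Lemma n2D : 2 < n. Proof. lia. Qed.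
Definition pD : 'I_n := Ordinal n0D.
Definition qD : 'I_n := Ordinal n1D.
Definition cD : 'I_n := Ordinal n2D.

Lemma hD_out (u : 'I_n) : #|[set w | hD u w]| + (u == pD) + (u == qD) = n.-1.
Proof.
rewrite card_ordP; case: u => i Hi; rewrite -!val_eqE /=.
case: (eqVneq i 0) => [->|i0].
  rewrite (@count_by _ _ 2 n n n) //; first lia.
  by move=> j Hj; rewrite /hDn; lia.
case: (eqVneq i 1) => [->|i1].
  rewrite (@count_by _ _ 2 n n n) //; first lia.
  by move=> j Hj; rewrite /hDn; lia.
rewrite (@count_by _ _ 0 i i.+1 n) //; first lia.
by move=> j Hj; rewrite /hDn; lia.
Qed.

Lemma hD_sym (u w : 'I_n) : hD u w = hD w u.
Proof. rewrite /hD /hDn; lia. Qed.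

Lemma hD_in (u : 'I_n) : #|[set w | hD w u]| + (u == pD) + (u == qD) = n.-1.
Proof.
have -> : [set w | hD w u] = [set w | hD u w] by apply/setP => w; rewrite !inE hD_sym.
exact: hD_out.
Qed.

Lemma hD_loop (u : 'I_n) : ~~ hD u u.
Proof. rewrite /hD /hDn; lia. Qed.

Lemma pqD : pD != qD. Proof. by rewrite -val_eqE. Qed.

Lemma hD_K1 (u v : 'I_n) : connect (@hD n) u v.
Proof.
case: (boolP (hD u v)) => [/connect1 //|nh].
case: (eqVneq u v) => [->|uv]; first exact: connect0.
have huc : hD u cD.
  move: nh uv; rewrite /hD /hDn -val_eqE /=; lia.
have hcv : hD cD v.
  move: nh uv; rewrite /hD /hDn -val_eqE /=; lia.
exact: connect_trans (connect1 huc) (connect1 hcv).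
Qed.

Lemma hD_K2 (w u : 'I_n) : u != w ->
  (exists z, [/\ (z == pD) || (z == qD), z != w & connect (hw (@hD n) w) u z]) /\
  (exists z, [/\ (z == pD) || (z == qD), z != w & connect (hw (@hD n) w) z u]).
Proof.
move=> uw.
case: (boolP ((u == pD) || (u == qD))) => uP.
  by split; exists u; split; rewrite ?connect0.
have [z [zP zw]] : exists z, ((z == pD) || (z == qD)) /\ z != w.
  case: (eqVneq pD w) => [E|pw].
    by exists qD; rewrite eqxx orbT -E eq_sym pqD.
  by exists pD; rewrite eqxx.
have huz : hD u z && hD z u.
  move: uP zP; rewrite /hD /hDn -!val_eqE /=; lia.
case/andP: huz => h1 h2.
split; exists z; split => //; apply: connect1; rewrite /hw /= ?h1 ?h2 ?uw ?zw //.
Qed.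
End DiInst.

Lemma part1 : forall n : nat, 3 <= n ->
     exists e : rel 'I_(2 * n),
       [/\ loopless e, strongly_2_connected e, regular e n.-1 & ~ hamiltonian e].
Proof.
move=> n n3.
have HN : #|{: bool * 'I_n}| = 2 * n by rewrite card_prod card_bool card_ord.
pose Gd := G (@hD n) (pD n3) (qD n3).
exists (eI HN Gd); split.
- apply: tr_loopless; apply: G_loopless; by [apply: pqD | apply: hD_loop].
- apply: tr_s2c; apply: G_s2c; by [apply: pqD | rewrite card_ord | apply: hD_K1 | apply: hD_K2].
- apply: tr_regular; apply: G_regular; by [apply: pqD | apply: hD_out | apply: hD_in].
- apply: tr_ham; apply: G_noham; by [apply: pqD | rewrite card_ord].
Qed.

Section Count.
Variables (V : finType) (p q : V) (k : nat).

Lemma sum_eq1 (S : {set V}) (x : V) : \sum_(v in S) (v == x : nat) <= 1.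
Proof.
rewrite big_mkcond /= (bigD1 x) //= eqxx big1 ?addn0; first by case: (x \in S).
by move=> v /negbTE vx; rewrite vx; case: (v \in S).
Qed.

Lemma card_sum (S : {set V}) (P : pred V) : #|[set w in S | P w]| = \sum_(w in S) (P w : nat).
Proof.
rewrite -sum1_card (eq_bigl (fun w => (w \in S) && P w)); last by move=> w; rewrite !inE.
by rewrite big_mkcondr /=; apply: eq_bigr => w _; case: (P w).
Qed.

Lemma dens (r : rel V) (S W : {set V}) :
  (forall u, ~~ r u u) -> (forall u v, r u v -> ~~ r v u) ->
  (forall u, k <= #|[set w | r u w]| + (u == p) + (u == q)) ->
  (forall v t, v \in S -> r v t -> (t \in S) || (t \in W)) ->
  2 * (k * #|S|) <= #|S| * (#|S| - 1) + 2 * (#|S| * #|W|) + 4.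
Proof.
move=> rl ro rd rc.
set s := #|S|.
have H1 : k * s <= \sum_(v in S) (#|[set w | r v w]| + (v == p) + (v == q)).
  rewrite mulnC -sum_nat_const; apply: leq_sum => v _; exact: rd.
have H2 : \sum_(v in S) ((v == p : nat) + (v == q)) <= 2.
  rewrite big_split /=; have := sum_eq1 S p; have := sum_eq1 S q; lia.
have H3 : \sum_(v in S) #|[set w | r v w]| <= \sum_(v in S) (#|[set w in S | r v w]| + #|W|).
  apply: leq_sum => v vS.
  have sub : [set w | r v w] \subset [set w in S | r v w] :|: W.
    apply/subsetP => w; rewrite !inE => rvw; have := rc v w vS rvw.
    by rewrite rvw andbT.
  apply: leq_trans (subset_leq_card sub) _; rewrite cardsU; exact: leq_subr.
set e := \sum_(v in S) #|[set w in S | r v w]|.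
have He : e = \sum_(v in S) \sum_(w in S) (r v w : nat).
  by apply: eq_bigr => v _; rewrite card_sum.
have He' : e = \sum_(v in S) \sum_(w in S) (r w v : nat).
  by rewrite He exchange_big.
have H4 : 2 * e <= s * (s - 1).
  have -> : 2 * e = \sum_(v in S) \sum_(w in S) ((r v w : nat) + r w v).
    rewrite mul2n -addnn {1}He He' -big_split /=; apply: eq_bigr => v _.
    by rewrite big_split.
  have -> : s * (s - 1) = \sum_(v in S) (s - 1) by rewrite sum_nat_const.
  apply: leq_sum => v vS.
  apply: (@leq_trans (\sum_(w in S) (w != v : nat))).
    apply: leq_sum => w _; case: (eqVneq w v) => [->|wv].
      by rewrite (negbTE (rl v)).
    by case E: (r v w); [rewrite (negbTE (ro _ _ E)) | case: (r w v)].
  rewrite -card_sum.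
  have -> : [set w in S | w != v] = S :\ v by apply/setP => w; rewrite !inE andbC.
  by move: (cardsD1 v S); rewrite vS /s; lia.
have H5 : \sum_(v in S) (#|[set w | r v w]| + (v == p) + (v == q)) =
          \sum_(v in S) #|[set w | r v w]| + \sum_(v in S) ((v == p : nat) + (v == q)).
  by rewrite -big_split /=; apply: eq_bigr => v _; rewrite addnA.
have H6 : \sum_(v in S) (#|[set w in S | r v w]| + #|W|) = e + s * #|W|.
  by rewrite big_split /= sum_nat_const mulnC.
lia.
Qed.

Variable h : rel V.
Hypotheses (hl : forall u, ~~ h u u) (ho : forall u v, h u v -> ~~ h v u).
Hypothesis dout : forall u, k <= #|[set w | h u w]| + (u == p) + (u == q).
Hypothesis din : forall u, k <= #|[set w | h w u]| + (u == p) + (u == q).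

Lemma conn_count (W : {set V}) :
  (forall x y, 0 < x -> 0 < y -> x + y + #|W| = #|V| ->
     2 * (k * x) <= x * (x - 1) + 2 * (x * #|W|) + 4 ->
     2 * (k * y) <= y * (y - 1) + 2 * (y * #|W|) + 4 -> False) ->
  forall u z, u \notin W -> z \notin W ->
  connect [rel a b | [&& h a b, a \notin W & b \notin W]] u z.
Proof.
move=> NUM u z uW zW.
set R := [rel a b | [&& h a b, a \notin W & b \notin W]].
case: (boolP (connect R u z)) => // nc; exfalso.
set X := [set v | (v \notin W) && connect R u v].
set Y := [set v | (v \notin W) && ~~ connect R u v].
have uX : u \in X by rewrite inE uW connect0.
have zY : z \in Y by rewrite inE zW nc.
have part : #|X| + #|Y| + #|W| = #|V|.
  have := cardsID [set v | connect R u v] (~: W).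
  have -> : ~: W :&: [set v | connect R u v] = X by apply/setP => v; rewrite !inE.
  have -> : ~: W :\: [set v | connect R u v] = Y by apply/setP => v; rewrite !inE andbC.
  by move=> ->; rewrite addnC cardsC.
apply: (NUM #|X| #|Y|) => //.
- by apply/card_gt0P; exists u.
- by apply/card_gt0P; exists z.
- apply: (dens (r := h)) => // v t; rewrite !inE => /andP [vW cv] hvt.
  case: (boolP (t \in W)) => tW; rewrite ?orbT //= orbF.
  by apply: connect_trans cv (connect1 _); rewrite /= hvt vW tW.
- apply: (dens (r := fun a b => h b a)) => //.
  + by move=> a b /ho.
  + move=> v t; rewrite !inE => /andP [vW cv] htv.
    case: (boolP (t \in W)) => tW; rewrite ?orbT //= orbF.
    apply/negP => ct; move/negP: cv; apply.
    by apply: connect_trans ct (connect1 _); rewrite /= htv vW tW.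
Qed.
End Count.

Lemma numkey n c z : 0 < z -> z + 2 * c <= 2*n - 2 -> c <= 1 ->
  2 * (n.-1 * z) <= z * (z - 1) + 2 * (z * c) + 4 -> 4 < n -> False.
Proof.
move=> z0 zb c1 Hz n5.
case: (leqP z 4) => z4.
  have : z = 1 \/ z = 2 \/ z = 3 \/ z = 4 by lia.
  by case=> [?|[?|[?|?]]]; subst z; lia.
have hzz : z * (z - 1) + z = z * z by rewrite mulnBr muln1 subnK // leq_pmull.
have : c = 0 \/ c = 1 by lia.
case=> ?; subst c; rewrite ?muln0 ?muln1 in Hz.
- pose t := 2 * n - 1 - z.
  have t1 : 1 <= t by rewrite /t; lia.
  have e2 : 2 * n.-1 + 1 = z + t by rewrite /t; lia.
  have eA : 2 * (n.-1 * z) + z = z * z + t * z.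
    by rewrite mulnA -{2}(mul1n z) -mulnDl e2 mulnDl.
  have h1 := leq_pmull z t1.
  lia.
- pose t := 2 * n - 3 - z.
  have t1 : 1 <= t by rewrite /t; lia.
  have e2 : 2 * n.-1 = z + t + 1 by rewrite /t; lia.
  have eA : 2 * (n.-1 * z) = z * z + t * z + z.
    by rewrite mulnA e2 !mulnDl mul1n.
  have h1 := leq_pmull z t1.
  lia.
Qed.

Definition circ (n i j : nat) := ((i < j) && (j < i + n)) || (j + (2*n).+1 < i + n).
Definition Fo (n i j : nat) :=
  [|| (i == 2*n) && (j == 0), (i == 0) && (j == 1) | (i == n+2) && (j == 2*n)].
Definition Ao (n i j : nat) := (i == n+2) && (j == 1).
Definition hOn (n i j : nat) := circ n i j && ~~ Fo n i j || Ao n i j.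
Definition hO (n : nat) : rel 'I_(2*n).+1 := fun a b => hOn n a b.
Definition pO (n : nat) : 'I_(2*n).+1 := ord0.
Definition qO (n : nat) : 'I_(2*n).+1 := ord_max.

Section OInst.
Variable n : nat.
Hypothesis n3 : 2 < n.

Lemma hO_out_nat i : i < (2*n).+1 ->
  count (hOn n i) (iota 0 (2*n).+1) + (i == 0) + (i == 2*n) = n.-1.
Proof.
move=> Hi.
case: (eqVneq i 0) => [->|i0].
  rewrite (@count_by _ _ 2 n n n); [lia | lia | move=> j Hj; rewrite /hOn /circ /Fo /Ao; lia].
case: (eqVneq i (2*n)) => [->|i2].
  rewrite (@count_by _ _ 1 n.-1 n.-1 n.-1); [lia | lia | move=> j Hj; rewrite /hOn /circ /Fo /Ao; lia].
case: (eqVneq i (n+2)) => [->|i3].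
  rewrite (@count_by _ _ 0 2 (n+3) (2*n)); [lia | lia | move=> j Hj; rewrite /hOn /circ /Fo /Ao; lia].
rewrite (@count_by _ _ 0 (i + n - (2*n).+1) i.+1 (i+n)); [lia | lia | move=> j Hj; rewrite /hOn /circ /Fo /Ao; lia].
Qed.

Lemma hO_in_nat j : j < (2*n).+1 ->
  count (fun i => hOn n i j) (iota 0 (2*n).+1) + (j == 0) + (j == 2*n) = n.-1.
Proof.
move=> Hj.
case: (eqVneq j 0) => [->|j0].
  rewrite (@count_by _ _ (n+2) (2*n) (2*n) (2*n)); [lia | lia | move=> i Hi; rewrite /hOn /circ /Fo /Ao; lia].
case: (eqVneq j 1) => [->|j1].
  rewrite (@count_by _ _ (n+2) (2*n).+1 (2*n).+1 (2*n).+1); [lia | lia | move=> i Hi; rewrite /hOn /circ /Fo /Ao; lia].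
case: (eqVneq j (2*n)) => [->|j2].
  rewrite (@count_by _ _ (n+1) (n+2) (n+3) (2*n)); [lia | lia | move=> i Hi; rewrite /hOn /circ /Fo /Ao; lia].
rewrite (@count_by _ _ (j.+1 - n) j (j+n+2) (2*n).+1); [lia | lia | move=> i Hi; rewrite /hOn /circ /Fo /Ao; lia].
Qed.

Lemma hO_out (u : 'I_(2*n).+1) : #|[set w | hO u w]| + (u == pO n) + (u == qO n) = n.-1.
Proof. by rewrite card_ordP -!val_eqE /=; apply: hO_out_nat. Qed.

Lemma hO_in (u : 'I_(2*n).+1) : #|[set w | hO w u]| + (u == pO n) + (u == qO n) = n.-1.
Proof. by rewrite (card_ordP _ (fun w => hOn n w u)) -!val_eqE /=; apply: hO_in_nat. Qed.

Lemma hO_loop (u : 'I_(2*n).+1) : ~~ hO u u.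
Proof. by case: u => i Hi; rewrite /hO /hOn /circ /Fo /Ao /=; lia. Qed.

Lemma hO_or (u v : 'I_(2*n).+1) : hO u v -> ~~ hO v u.
Proof. by case: u v => i Hi [j Hj]; rewrite /hO /hOn /circ /Fo /Ao /=; lia. Qed.

Lemma pqO : pO n != qO n. Proof. by rewrite -val_eqE /=; lia. Qed.
End OInst.

Fixpoint iterS (R : nat -> nat -> bool) (m k : nat) (S : seq nat) : seq nat :=
  if k is k'.+1 then iterS R m k' (S ++ [seq j <- iota 0 m | has (fun i => R i j) S]) else S.
Definition reachb (R : nat -> nat -> bool) m u z := z \in iterS R m m [:: u].
Definition K1n n := let m := (2*n).+1 in
  all (fun u => all (fun z => reachb (hOn n) m u z) (iota 0 m)) (iota 0 m).
Definition Rw n w := fun i j => [&& hOn n i j, i != w & j != w].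
Definition K2n n := let m := (2*n).+1 in
  all (fun w => all (fun u => (u != w) ==>
     (((0 != w) && reachb (Rw n w) m u 0) || ((2*n != w) && reachb (Rw n w) m u (2*n))) &&
     (((0 != w) && reachb (fun i j => Rw n w j i) m u 0) || ((2*n != w) && reachb (fun i j => Rw n w j i) m u (2*n))))
  (iota 0 m)) (iota 0 m).
Lemma small34 : [&& K1n 3, K2n 3, K1n 4 & K2n 4].
Proof. vm_compute. reflexivity. Qed.

Lemma numO n c x y : 4 < n -> c <= 1 -> 0 < x -> 0 < y -> x + y + c = (2*n).+1 ->
  2 * (n.-1 * x) <= x * (x - 1) + 2 * (x * c) + 4 ->
  2 * (n.-1 * y) <= y * (y - 1) + 2 * (y * c) + 4 -> False.
Proof.
move=> n5 c1 x0 y0 E Hx Hy.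
case: (leqP (x + 2 * c) (2 * n - 2)) => hx; first exact: (numkey x0 hx c1 Hx n5).
have hy : y + 2 * c <= 2 * n - 2 by lia.
exact: (numkey y0 hy c1 Hy n5).
Qed.

Lemma iterS_all (R : nat -> nat -> bool) m (Q : pred nat) :
  (forall i j, Q i -> R i j -> j < m -> Q j) ->
  forall k S, all Q S -> all Q (iterS R m k S).
Proof.
move=> HQ; elim=> [|k IH] S HS //=; apply: IH; rewrite all_cat HS /=.
apply/allP => j; rewrite mem_filter mem_iota => /andP [/hasP [i iS Rij] /andP [_ jm]].
exact: HQ (allP HS i iS) Rij jm.
Qed.

Lemma reach_fw m (R : nat -> nat -> bool) (u z : 'I_m.+1) :
  reachb R m.+1 u z -> connect [rel a b : 'I_m.+1 | R a b] u z.
Proof.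
move=> H.
pose Q := fun j => (j < m.+1) && connect [rel a b : 'I_m.+1 | R a b] u (inord j).
have : all Q (iterS R m.+1 m.+1 [:: val u]).
  apply: iterS_all; last by rewrite /= /Q ltn_ord inord_val connect0.
  move=> i j /andP [im ci] Rij jm; rewrite /Q jm /=.
  by apply: connect_trans ci (connect1 _); rewrite /= !inordK.
by move/allP => /(_ _ H) /andP [_]; rewrite inord_val.
Qed.

Lemma reach_bw m (R : nat -> nat -> bool) (u z : 'I_m.+1) :
  reachb (fun i j => R j i) m.+1 u z -> connect [rel a b : 'I_m.+1 | R a b] z u.
Proof.
move=> H.
pose Q := fun j => (j < m.+1) && connect [rel a b : 'I_m.+1 | R a b] (inord j) u.
have : all Q (iterS (fun i j => R j i) m.+1 m.+1 [:: val u]).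
  apply: iterS_all; last by rewrite /= /Q ltn_ord inord_val connect0.
  move=> i j /andP [im ci] Rij jm; rewrite /Q jm /=.
  by apply: connect_trans (connect1 _) ci; rewrite /= !inordK.
by move/allP => /(_ _ H) /andP [_]; rewrite inord_val.
Qed.

Lemma K1_of_n n : K1n n -> forall u v : 'I_(2*n).+1, connect (@hO n) u v.
Proof.
move=> K u v.
have := allP (allP K _ (_ : val u \in iota 0 (2*n).+1)) _ (_ : val v \in iota 0 (2*n).+1).
rewrite !mem_iota !ltn_ord => /(_ isT isT) /reach_fw.
by rewrite (@eq_connect _ (@hO n) [rel a b : 'I_(2*n).+1 | hOn n a b]).
Qed.

Lemma hwO n (w : 'I_(2*n).+1) :
  connect (hw (@hO n) w) =2 connect [rel a b : 'I_(2*n).+1 | Rw n w a b].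
Proof. by apply: eq_connect => a b; rewrite /hw /Rw /= -!val_eqE. Qed.

Lemma K2_of_n n : K2n n -> forall w u : 'I_(2*n).+1, u != w ->
  (exists z, [/\ (z == pO n) || (z == qO n), z != w & connect (hw (@hO n) w) u z]) /\
  (exists z, [/\ (z == pO n) || (z == qO n), z != w & connect (hw (@hO n) w) z u]).
Proof.
move=> K w u uw.
have := allP (allP K _ (_ : val w \in iota 0 (2*n).+1)) _ (_ : val u \in iota 0 (2*n).+1).
rewrite !mem_iota !ltn_ord => /(_ isT isT); rewrite val_eqE uw /=.
case/andP=> H1 H2; split.
- case/orP: H1 => /andP [zw R].
  + exists (pO n); rewrite eqxx -val_eqE /= zw; split => //.
    by rewrite hwO; apply: (@reach_fw (2*n) (Rw n w) u (pO n)).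
  + exists (qO n); rewrite eqxx orbT -val_eqE /= zw; split => //.
    by rewrite hwO; apply: (@reach_fw (2*n) (Rw n w) u (qO n)).
- case/orP: H2 => /andP [zw R].
  + exists (pO n); rewrite eqxx -val_eqE /= zw; split => //.
    by rewrite hwO; apply: (@reach_bw (2*n) (Rw n w) u (pO n)).
  + exists (qO n); rewrite eqxx orbT -val_eqE /= zw; split => //.
    by rewrite hwO; apply: (@reach_bw (2*n) (Rw n w) u (qO n)).
Qed.

Lemma hO_conn n (W : {set 'I_(2*n).+1}) : 4 < n -> #|W| <= 1 ->
  forall u z, u \notin W -> z \notin W ->
  connect [rel a b | [&& hO a b, a \notin W & b \notin W]] u z.
Proof.
move=> n5 W1; have n3 : 2 < n by lia.
apply: (@conn_count _ (pO n) (qO n) n.-1 (@hO n)).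
- exact: hO_loop.
- exact: hO_or.
- by move=> u; rewrite hO_out.
- by move=> u; rewrite hO_in.
- move=> x y x0 y0; rewrite card_ord => E; exact: numO n5 W1 x0 y0 E.
Qed.

Lemma hO_K1 n : 2 < n -> forall u v : 'I_(2*n).+1, connect (@hO n) u v.
Proof.
move=> n3; case: (leqP n 4) => n4.
  have : n = 3 \/ n = 4 by lia.
  by case=> ?; subst n; apply: K1_of_n; case/and4P: small34.
move=> u v.
have W1 : #|(set0 : {set 'I_(2*n).+1})| <= 1 by rewrite cards0.
have := @hO_conn n set0 n4 W1 u v.
rewrite !inE => /(_ isT isT) H.
by apply: (connect_sub _ H) => a b /= /andP [hab _]; apply: connect1.
Qed.

Lemma hO_K2 n : 2 < n -> forall w u : 'I_(2*n).+1, u != w ->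
  (exists z, [/\ (z == pO n) || (z == qO n), z != w & connect (hw (@hO n) w) u z]) /\
  (exists z, [/\ (z == pO n) || (z == qO n), z != w & connect (hw (@hO n) w) z u]).
Proof.
move=> n3; case: (leqP n 4) => n4.
  have : n = 3 \/ n = 4 by lia.
  by case=> ?; subst n; apply: K2_of_n; case/and4P: small34.
move=> w u uw.
have pq := pqO n3.
have [z [zP zw]] : exists z, ((z == pO n) || (z == qO n)) /\ z != w.
  case: (eqVneq (pO n) w) => [E|pw].
    by exists (qO n); rewrite eqxx orbT -E eq_sym pq.
  by exists (pO n); rewrite eqxx.
have C : forall a b, a != w -> b != w -> connect (hw (@hO n) w) a b.
  move=> a b aw bw.
  have W1 : #|[set w]| <= 1 by rewrite cards1.
  have := @hO_conn n [set w] n4 W1 a b.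
  rewrite !inE aw bw => /(_ isT isT) H.
  apply: (connect_sub _ H) => c d /=; rewrite !inE => Hcd; apply: connect1.
  by rewrite /hw /=.
by split; exists z; split => //; apply: C.
Qed.

Lemma part2 : forall n : nat, 3 <= n ->
     exists e : rel 'I_(4 * n + 2),
       [/\ oriented e, strongly_2_connected e, regular e n.-1 & ~ hamiltonian e].
Proof.
move=> n n3.
have HN : #|{: bool * 'I_(2*n).+1}| = 4 * n + 2 by rewrite card_prod card_bool card_ord; lia.
exists (eI HN (G (@hO n) (pO n) (qO n))); split.
- apply: tr_oriented; apply: G_oriented; by [apply: pqO | apply: hO_loop | apply: hO_or].
- apply: tr_s2c; apply: G_s2c;
    by [apply: pqO | rewrite card_ord; lia | apply: hO_K1 | apply: hO_K2].
- apply: tr_regular; apply: G_regular; by [apply: pqO | apply: hO_out | apply: hO_in].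
- apply: tr_ham; apply: G_noham; by [apply: pqO | rewrite card_ord; lia].
Qed.

Theorem proposition1p6 :
  (forall n : nat, 3 <= n ->
     exists e : rel 'I_(2 * n),
       [/\ loopless e, strongly_2_connected e, regular e n.-1 & ~ hamiltonian e])
  /\
  (forall n : nat, 3 <= n ->
     exists e : rel 'I_(4 * n + 2),
       [/\ oriented e, strongly_2_connected e, regular e n.-1 & ~ hamiltonian e]).
Proof. split; [exact: part1 | exact: part2]. Qed.
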